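(* Assume the general setting of the context, with Hypothesis A holding for $r=\sum_{i=0}^{\bar k}r_i$. If $\hat\delta\in(0,\infty)^{\bar k}$ is feasible, then the map $\delta\mapsto\inf_{\pi\in\mathcal H(\delta)}\pi(r_0)$ is continuous at $\hat\delta$.
   Context: General setting. Consider the controlled diffusion $dX_t=b(X_t,U_t)\,dt+\sigma(X_t)\,dW_t$ in $\mathbb R^d$, where $W$ is a standard $d$-dimensional Brownian motion and the control takes values in a compact metrizable set $\mathbb U$. Assume: $b$ continuous and, together with $\sigma$, locally Lipschitz in $x$ (uniformly in $u$); $|b(x,u)|^2+\|\sigma(x)\|^2\le C(1+|x|^2)$; $a=\sigma\sigma^{\mathsf T}$ uniformly positive definite on every ball. Controls may be relaxed ($\mathcal P(\mathbb U)$-valued, with $b$ and costs extended by integration). Controlled generator $\mathcal L^u f=\tfrac12\sum a_{ij}\partial_{ij}f+b(x,u)\cdot\nabla f$. $\mathscr G=\{\pi\in\mathcal P(\mathbb R^d\times\mathbb U):\int\mathcal L^u f\,d\pi=0\ \forall f\in C_c^\infty(\mathbb R^d)\}$ (the set of ergodic occupation measures of stable stationary Markov controls); $\pi(g)=\int g\,d\pi$. Costs $r_0,\dots,r_{\bar k}\ge0$ continuous, locally Lipschitz in $x$ uniformly in $u$; $r=\sum_i r_i$. For $\delta\in\mathbb R_+^{\bar k}$: $\mathcal H(\delta)=\{\pi\in\mathscr G:\pi(r_i)\le\delta_i,\ i=1,\dots,\bar k\}$ and $\mathcal H^{\circ}(\delta)=\{\pi\in\mathscr G:\pi(r_i)<\delta_i,\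 i=1,\dots,\bar k\}$. A vector $\delta\in(0,\infty)^{\bar k}$ is feasible if there is $\pi'\in\mathcal H^\circ(\delta)$ with $\pi'(r_0)<\infty$. Hypothesis A (for a cost $r$): there is an open $\mathcal K\subset\mathbb R^d$ such that (i) $\bar{\mathcal K}\cap\{x:\min_u r(x,u)\le c\}$ is compact for all $c$; (ii) there exist nonnegative inf-compact $\mathcal V\in C^2(\mathbb R^d)$ and $h\in C(\mathbb R^d\times\mathbb U)$ with $\mathcal L^u\mathcal V\le1-h$ on $\mathcal K^c\times\mathbb U$ and $\mathcal L^u\mathcal V\le 1+r$ on $\mathcal K\times\mathbb U$. *)

(* Defs.v *)
From HB Require Import structures.
From mathcomp Require Import all_boot all_order all_algebra.
From mathcomp Require Import all_classical all_reals all_analysis.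
Set Implicit Arguments. Unset Strict Implicit. Unset Printing Implicit Defensive.
Import Order.TTheory GRing.Theory Num.Theory.
Import numFieldNormedType.Exports.
Local Open Scope classical_set_scope.
Local Open Scope ring_scope.

Section ControlledDiffusion.
Variables (R : realType) (d : nat).
Local Notation X := ('rV[R]_d : normedModType R).

Definition ebasis (i : 'I_d) : X := delta_mx 0 i.

Definition pd (i : 'I_d) (f : X -> R) : X -> R := fun x => derive f x (ebasis i).

Definition iter_pd (s : seq 'I_d) (f : X -> R) : X -> R := foldr pd f s.

Definition smooth (f : X -> R) := forall (s : seq 'I_d) (x : X), differentiable (iter_pd s f) x.

Definition C2 (f : X -> R) :=
  [/\ forall x, differentiable f x,
      forall i x, differentiable (pd i f) x
    & forall i j, continuous (pd i (pd j f))].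

Definition Cc_inf (f : X -> R) := smooth f /\ compact (closure [set x | f x != 0]).

Variable U : pseudoPMetricType R.

Definition diffusion_mx (sigma : X -> 'M[R]_d) (x : X) : 'M[R]_d := sigma x *m (sigma x)^T.

Definition Lgen (b : X -> U -> X) (sigma : X -> 'M[R]_d) (f : X -> R) (x : X) (u : U) : R :=
  2^-1 * (\sum_(i < d) \sum_(j < d) diffusion_mx sigma x i j * pd i (pd j f) x)
  + \sum_(i < d) b x u 0 i * pd i f x.

Definition Omega := g_sigma_algebraType (@open (X * U)%type).

Definition pint (pi : probability Omega R) (g : X -> U -> R) : \bar R :=
  (\int[pi]_p (g p.1 p.2)%:E)%E.

Definition Gset (b : X -> U -> X) (sigma : X -> 'M[R]_d) : set (probability Omega R) :=
  [set pi | forall f : X -> R, Cc_inf f -> pint pi (Lgen b sigma f) = 0%E].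

Variable kbar : nat.

(* r_0 = r ord0, r_i = r (lift ord0 i') for i' : 'I_kbar (i = i'+1) *)
Definition Hset (b : X -> U -> X) (sigma : X -> 'M[R]_d) (r : 'I_kbar.+1 -> X -> U -> R)
  (delta : 'rV[R]_kbar) : set (probability Omega R) :=
  [set pi | Gset b sigma pi /\
     forall i : 'I_kbar, (pint pi (r (lift ord0 i)) <= (delta 0 i)%:E)%E].

Definition Hset_circ (b : X -> U -> X) (sigma : X -> 'M[R]_d) (r : 'I_kbar.+1 -> X -> U -> R)
  (delta : 'rV[R]_kbar) : set (probability Omega R) :=
  [set pi | Gset b sigma pi /\
     forall i : 'I_kbar, (pint pi (r (lift ord0 i)) < (delta 0 i)%:E)%E].

Definition feasible (b : X -> U -> X) (sigma : X -> 'M[R]_d) (r : 'I_kbar.+1 -> X -> U -> R)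
  (delta : 'rV[R]_kbar) :=
  (forall i, 0 < delta 0 i) /\
  exists pi', Hset_circ b sigma r delta pi' /\ (pint pi' (r ord0) < +oo)%E.

Definition value (b : X -> U -> X) (sigma : X -> 'M[R]_d) (r : 'I_kbar.+1 -> X -> U -> R)
  (delta : 'rV[R]_kbar) : \bar R :=
  ereal_inf [set pint pi (r ord0) | pi in Hset b sigma r delta].

Definition inf_compact (T : topologicalType) (h : T -> R) := forall c : R, compact [set z | h z <= c].

Definition HypA (b : X -> U -> X) (sigma : X -> 'M[R]_d) (rr : X -> U -> R) :=
  exists K : set X, open K /\
   (forall c : R, compact (closure K `&` [set x | inf (range (rr x)) <= c])) /\
   exists (V : X -> R) (h : X -> U -> R),
     [/\ (forall x, 0 <= V x), inf_compact V & C2 V] /\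
     [/\ (forall x u, 0 <= h x u),
         continuous (fun p : X * U => h p.1 p.2)
       & inf_compact (fun p : X * U => h p.1 p.2)] /\
     (forall x u, ~ K x -> Lgen b sigma V x u <= 1 - h x u) /\
     (forall x u, K x -> Lgen b sigma V x u <= 1 + rr x u).

Definition loc_lip_unif (W : normedModType R) (g : X -> U -> W) :=
  forall rho : R, exists L : R, forall x y u,
    `|x| <= rho -> `|y| <= rho -> `|g x u - g y u| <= L * `|x - y|.

Definition loc_lip (W : normedModType R) (g : X -> W) :=
  forall rho : R, exists L : R, forall x y,
    `|x| <= rho -> `|y| <= rho -> `|g x - g y| <= L * `|x - y|.

End ControlledDiffusion.

(* Main.v *)
Require Import Defs.
From HB Require Import structures.
From mathcomp Require Import all_boot all_order all_algebra.
From mathcomp Require Import all_classical all_reals all_analysis.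
From mathcomp Require Import measurable_realfun.
From mathcomp Require Import ring lra.
Import Order.TTheory GRing.Theory Num.Theory.
Import numFieldNormedType.Exports.
Local Open Scope classical_set_scope.
Local Open Scope ring_scope.

Section Mix.
Set Implicit Arguments. Unset Strict Implicit.
Context d0 (T : measurableType d0) (R : realType) (P1 P2 : probability T R)
  (a b : {nonneg R}) (hab : a%:num + b%:num = 1).

Definition mixf (A : set T) : \bar R := (a%:num%:E * P1 A + b%:num%:E * P2 A)%E.

Lemma mixfE : mixf = measure_add (mscale a P1) (mscale b P2).
Proof.
apply/funext => A; rewrite measure_addE.
by [].
Qed.

Let mixf0 : mixf set0 = 0%E.
Proof. by rewrite /mixf !measure0 !mule0 adde0. Qed.
Let mixf_ge0 A : (0 <= mixf A)%E.
Proof. by rewrite /mixf adde_ge0 // mule_ge0. Qed.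
Let mixf_sa : semi_sigma_additive mixf.
Proof. rewrite mixfE; exact: measure_semi_sigma_additive. Qed.

HB.instance Definition _ := isMeasure.Build _ _ _ mixf mixf0 mixf_ge0 mixf_sa.

Lemma mixf_setT : mixf setT = 1%E.
Proof. by rewrite /mixf !probability_setT !mule1 -EFinD hab. Qed.

HB.instance Definition _ := Measure_isProbability.Build _ _ _ mixf mixf_setT.

Definition mixp : probability T R := mixf.

Lemma mix_ge0 (f : T -> \bar R) : measurable_fun setT f -> (forall x, 0 <= f x)%E ->
  (\int[mixp]_x f x = a%:num%:E * \int[P1]_x f x + b%:num%:E * \int[P2]_x f x)%E.
Proof.
move=> mf f0.
rewrite /mixp /= mixfE ge0_integral_measure_add //.
by rewrite !ge0_integral_mscale.
Qed.

Local Open Scope ereal_scope.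
Lemma mix_0 (f : T -> \bar R) : measurable_fun setT f ->
  (\int[P1]_x f x = 0)%E -> (\int[P2]_x f x = 0)%E -> (\int[mixp]_x f x = 0)%E.
Proof.
move=> mf h1 h2.
have key : forall (P : probability T R), (\int[P]_x f x = 0)%E ->
   exists c : R, (\int[P]_x f^\+ x = c%:E /\ \int[P]_x f^\- x = c%:E)%E.
  move=> P; rewrite integralE.
  have p0 : (0 <= \int[P]_x f^\+ x)%E by apply: integral_ge0 => x _; exact: funepos_ge0.
  have n0 : (0 <= \int[P]_x f^\- x)%E by apply: integral_ge0 => x _; exact: funeneg_ge0.
  move: p0 n0; case: (\int[P]_x f^\+ x) => [p| |]; case: (\int[P]_x f^\- x) => [n| |] //= p0 n0.
  move=> /eqP; rewrite -EFinD eqe subr_eq0 => /eqP ->; by exists n.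
rewrite [LHS]integralE.
have [c1 [p1 n1]] := key _ h1; have [c2 [p2 n2]] := key _ h2.
rewrite !mix_ge0 //.
- by rewrite p1 n1 p2 n2 subee.
all: try exact: measurable_funeneg.
all: try exact: measurable_funepos.
all: try (by move=> x; exact: funeneg_ge0).
all: try (by move=> x; exact: funepos_ge0).
Qed.

End Mix.


Lemma cont_meas (R : realType) (d : nat) (U : pseudoPMetricType R)
  (g : 'rV[R]_d * U -> R) : continuous g ->
  measurable_fun setT (fun p : Omega d U => (g p)%:E).
Proof.
move=> cg; apply/measurable_EFinP.
apply: (measurability _ (RGenOInfty.measurableE R)) => //.
move=> _ [_ [x ->] <-].
rewrite setTI.
apply: sub_sigma_algebra.
apply: open_comp; last exact: interval_open.
move=> p _; exact: cg.
Qed.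


Lemma cont_sum (R : realType) (T : topologicalType) n (F : 'I_n -> T -> R) :
  (forall i, continuous (F i)) -> continuous (fun p => \sum_(i < n) F i p).
Proof.
elim: n F => [|n IH] F HF.
  under eq_fun do rewrite big_ord0; exact: cst_continuous.
under eq_fun do rewrite big_ord_recr /=.
move=> x; apply: cvgD; last exact: HF.
exact: (IH (fun i => F (widen_ord (leqnSn n) i))).
Qed.

Lemma entry_le (R : realType) m n (A : 'M[R]_(m, n)) i j : `|A i j| <= `|A|.
Proof.
rewrite [X in _ <= X]/Num.norm /= mx_normrE.
exact: (le_bigmax _ (fun ij : 'I_m * 'I_n => `|A ij.1 ij.2|) (i, j)).
Qed.

Lemma entry_cont (R : realType) m n i j : continuous (fun A : 'M[R]_(m, n) => A i j).
Proof.
move=> A.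
have F : Filter (nbhs A) by apply: nbhs_filter.
apply/(@cvgrPdist_lt R R _ (nbhs A) F) => e e0.
have := @cvgr_dist_lt R _ _ (nbhs A) F (fun B => B) A (@cvg_id _ (nbhs A)) e e0.
apply: filterS => B hB.
apply: le_lt_trans hB.
have -> : A i j - B i j = (A - B) i j by rewrite !mxE.
exact: entry_le.
Qed.

Lemma lip_cont (R : realType) (d : nat) (W : normedModType R) (g : 'rV[R]_d -> W) :
  loc_lip g -> continuous g.
Proof.
move=> hl x.
have [L HL] := hl (`|x| + 1).
have F : Filter (nbhs x) by apply: nbhs_filter.
apply/(@cvgrPdist_lt R W _ (nbhs x) F) => e e0.
have ep : 0 < Num.min 1 (e / (`|L| + 1)).
  by rewrite lt_min ltr01 /= divr_gt0 // ltr_wpDl.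
have := @cvgr_dist_lt R _ _ (nbhs x) F (fun y => y) x (@cvg_id _ (nbhs x)) _ ep.
apply: filterS => y hy.
move: hy; rewrite lt_min => /andP[h1 h2].
have hy : `|y| <= `|x| + 1.
  have : `|y| <= `|x| + `|x - y|.
    have e1 : y = x - (x - y) by rewrite opprB addrC subrK.
    by rewrite {1}e1; exact: ler_normB.
  by move=> /le_trans; apply; rewrite lerD2l ltW.
have hx : `|x| <= `|x| + 1 by rewrite lerDl.
apply: (le_lt_trans (HL _ _ hx hy)).
apply: (le_lt_trans (y := (`|L| + 1) * `|x - y|)).
  apply: (le_trans (y := `|L| * `|x - y|)).
    by rewrite ler_wpM2r //; exact: ler_norm.
  by rewrite ler_wpM2r // lerDl.
by rewrite mulrC -ltr_pdivlMr // ltr_wpDl.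
Qed.

Lemma fst_cont (R : realType) (d : nat) (U : pseudoPMetricType R) (g : 'rV[R]_d -> R) :
  continuous g -> continuous (fun p : 'rV[R]_d * U => g p.1).
Proof.
move=> cg p.
apply: (@continuous_comp _ _ _ (fun p : 'rV[R]_d * U => p.1) g); last exact: cg.
exact: cvg_fst.
Qed.

Lemma Lgen_cont (R : realType) (d : nat) (U : pseudoPMetricType R)
  (b : 'rV[R]_d -> U -> 'rV[R]_d) (sigma : 'rV[R]_d -> 'M[R]_d) (f : 'rV[R]_d -> R) :
  continuous (fun p : 'rV[R]_d * U => b p.1 p.2) -> continuous sigma -> smooth f ->
  continuous (fun p : 'rV[R]_d * U => Lgen b sigma f p.1 p.2).
Proof.
move=> cb cs sf.
have cpd : forall s, continuous (iter_pd s f).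
  by move=> s x; apply: differentiable_continuous; exact: sf.
have csig : forall i k, continuous (fun x => sigma x i k).
  move=> i k x; apply: (@continuous_comp _ _ _ sigma (fun A : 'M[R]_d => A i k)).
    exact: cs.
  exact: entry_cont.
rewrite /Lgen => p.
apply: cvgD.
  apply: cvgM; first exact: cvg_cst.
  apply: (@cont_sum R _ d (fun i p => \sum_(j < d) diffusion_mx sigma p.1 i j * pd i (pd j f) p.1) _ p).
  move=> i; apply: cont_sum => j.
  move=> q; apply: cvgM.
    have cd : continuous (fun q : 'rV[R]_d * U => diffusion_mx sigma q.1 i j).
      rewrite /diffusion_mx.
      have -> : (fun q : 'rV[R]_d * U => (sigma q.1 *m (sigma q.1)^T) i j) =
        (fun q => \sum_(k < d) sigma q.1 i k * sigma q.1 j k).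
        by apply/funext => q'; rewrite mxE; apply: eq_bigr => k _; rewrite mxE.
      apply: cont_sum => k; move=> q'; apply: cvgM.
      exact: (@fst_cont R d U (fun x => sigma x i k) (csig i k)).
      exact: (@fst_cont R d U (fun x => sigma x j k) (csig j k)).
    exact: cd.
  exact: (@fst_cont R d U (iter_pd [:: i; j] f) (cpd _)).
apply: (@cont_sum R _ d (fun i p => b p.1 p.2 0 i * pd i f p.1) _ p) => i q.
apply: cvgM.
  apply: (@continuous_comp _ _ _ (fun p : 'rV[R]_d * U => b p.1 p.2) (fun A : 'rV[R]_d => A 0 i)).
    exact: cb.
  exact: entry_cont.
exact: (@fst_cont R d U (iter_pd [:: i] f) (cpd _)).
Qed.

Theorem lemma3p4 (R : realType) (d kbar : nat) (U : pseudoPMetricType R)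
  (U_hausdorff : hausdorff_space U) (U_compact : compact [set: U])
  (b : 'rV[R]_d -> U -> 'rV[R]_d) (sigma : 'rV[R]_d -> 'M[R]_d)
  (b_cont : continuous (fun p : 'rV[R]_d * U => b p.1 p.2))
  (b_lip : loc_lip_unif b) (sigma_lip : loc_lip sigma)
  (growth : exists C : R, forall x u,
      `|b x u| ^+ 2 + `|sigma x| ^+ 2 <= C * (1 + `|x| ^+ 2))
  (ellipticity : forall rho : R, exists kappa : R, 0 < kappa /\
      forall (x : 'rV[R]_d) (xi : 'rV[R]_d), `|x| <= rho ->
        kappa * `|xi| ^+ 2 <= ((xi *m (diffusion_mx sigma x)) *m xi^T) 0 0)
  (r : 'I_kbar.+1 -> 'rV[R]_d -> U -> R)
  (r_ge0 : forall i x u, 0 <= r i x u)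
  (r_cont : forall i, continuous (fun p : 'rV[R]_d * U => r i p.1 p.2))
  (r_lip : forall i, loc_lip_unif (r i))
  (hypA : HypA b sigma (fun x u => \sum_(i < kbar.+1) r i x u))
  (deltahat : 'rV[R]_kbar)
  (feas : feasible b sigma r deltahat) :
  value b sigma r delta @[delta --> deltahat] --> value b sigma r deltahat.
Proof.
have pint_ge0 : forall (pi : probability (Omega d U) R) i, (0 <= pint pi (r i))%E.
  move=> pi i; rewrite /pint; apply: integral_ge0 => p _; rewrite lee_fin; exact: r_ge0.
have mixH : forall (p1 p2 : probability (Omega d U) R) (s : R), 0 <= s -> s <= 1 ->
    Gset b sigma p1 -> Gset b sigma p2 -> exists pi, Gset b sigma pi /\
    forall i, pint pi (r i) = ((1 - s)%:E * pint p1 (r i) + s%:E * pint p2 (r i))%E.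
  move=> p1 p2 s s0 s1 G1 G2.
  have h1 : 0 <= 1 - s by rewrite subr_ge0.
  pose a := NngNum h1. pose bb := NngNum s0.
  have hab : a%:num + bb%:num = 1 by rewrite /= subrK.
  exists (mixp p1 p2 hab); split.
  - move=> f Cf; rewrite /pint; apply: mix_0; [ | exact: G1 Cf | exact: G2 Cf].
    apply: cont_meas; apply: Lgen_cont => //; [exact: lip_cont | exact: Cf.1].
  - move=> i; rewrite /pint mix_ge0 //.
    + exact: cont_meas.
    + by move=> p; rewrite lee_fin.
case: feas => dpos [p' [[Gp' Hp'] Fin0]].
have fin_of : forall (pi : probability (Omega d U) R) i (z : R),
    (pint pi (r i) <= z%:E)%E -> pint pi (r i) = (fine (pint pi (r i)))%:E.
  move=> pi i z h; rewrite fineK // ge0_fin_numE ?pint_ge0 //.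
  exact: le_lt_trans h (ltry z).
pose ci i := fine (pint p' (r (lift ord0 i))).
have hci : forall i, pint p' (r (lift ord0 i)) = (ci i)%:E.
  by move=> i; apply: (fin_of _ _ (deltahat 0 i)); exact: ltW (Hp' i).
have ci_lt : forall i, ci i < deltahat 0 i.
  by move=> i; rewrite -lte_fin -hci.
pose c := fine (pint p' (r ord0)).
have hc : pint p' (r ord0) = c%:E.
  by rewrite fineK // ge0_fin_numE ?pint_ge0.
have c0 : 0 <= c by rewrite -lee_fin -hc pint_ge0.
pose m := \big[Num.min/1]_(i < kbar) (deltahat 0 i - ci i).
have m0 : 0 < m.
  by apply: lt_bigmin => //= i _; rewrite subr_gt0.
have mle : forall i, m <= deltahat 0 i - ci i.
  by move=> i; exact: bigmin_le.
pose phi := value b sigma r.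
have inH : forall δ : 'rV[R]_kbar, (forall i, ci i <= δ 0 i) -> Hset b sigma r δ p'.
  by move=> δ h; split => // i; rewrite hci lee_fin.
have phi_le_c : forall δ : 'rV[R]_kbar, (forall i, ci i <= δ 0 i) -> (phi δ <= c%:E)%E.
  move=> δ h; rewrite /phi /value -hc; apply: ereal_inf_lbound; exists p' => //.
  exact: inH.
have phi_ge0 : forall δ, (0 <= phi δ)%E.
  by move=> δ; apply/ereal_infP => _ [pi _ <-]; exact: pint_ge0.
pose v := fine (phi deltahat).
have hv : phi deltahat = v%:E.
  rewrite fineK // ge0_fin_numE //; apply: le_lt_trans (phi_le_c _ _) (ltry c).
  by move=> i; exact: ltW.
have key : forall δ : 'rV[R]_kbar, `|deltahat - δ| < m ->
    exists w, phi δ = w%:E /\ `|v - w| <= `|deltahat - δ| / m * c.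
  move=> δ he.
  have e0 : 0 <= `|deltahat - δ| by [].
  move: he e0; set e := `|deltahat - δ| => he e0.
  pose s := e / m.
  have s0 : 0 <= s by rewrite /s divr_ge0 // ltW.
  have s1 : s <= 1 by rewrite /s ler_pdivrMr // mul1r ltW.
  have sm : s * m = e by rewrite /s divfK // (gt_eqF m0).
  have ent : forall i, `|deltahat 0 i - δ 0 i| <= e.
    by move=> i; have := entry_le (deltahat - δ) 0 i; rewrite !mxE.
  have entl : forall i, deltahat 0 i - e <= δ 0 i /\ δ 0 i <= deltahat 0 i + e.
    by move=> i; have := ent i; rewrite ler_norml => /andP [h1 h2]; split; lra.
  have cost : forall (p1 pi : probability (Omega d U) R),
      pint pi (r ord0) = ((1 - s)%:E * pint p1 (r ord0) + s%:E * pint p' (r ord0))%E ->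
      (pint pi (r ord0) <= pint p1 (r ord0) + (s * c)%:E)%E.
    move=> p1 pi ->; rewrite hc.
    move: (pint_ge0 p1 ord0); case: (pint p1 (r ord0)) => [y| |] //= y0.
    + rewrite -!EFinM -!EFinD lee_fin; rewrite lee_fin in y0; nra.
    + by rewrite addye // leey.
  have UP : (phi δ <= phi deltahat + (s * c)%:E)%E.
    rewrite -leeBlDr //; apply/ereal_infP => _ [p1 [G1 H1] <-].
    have [pi [Gpi Hpi]] := mixH p1 p' s s0 s1 G1 Gp'.
    rewrite leeBlDr //; apply: le_trans (cost p1 pi (Hpi ord0)).
    apply: ereal_inf_lbound; exists pi => //; split => // i.
    have hx := fin_of p1 _ _ (H1 i).
    have xle : fine (pint p1 (r (lift ord0 i))) <= deltahat 0 i.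
      by rewrite -lee_fin -hx; exact: H1 i.
    rewrite Hpi hci hx -!EFinM -EFinD lee_fin.
    move: xle (mle i) (entl i) => xle mi [el er].
    have h1 : (1 - s) * fine (pint p1 (r (lift ord0 i))) <= (1 - s) * deltahat 0 i.
      by rewrite ler_wpM2l // subr_ge0.
    have h2 : s * ci i <= s * (deltahat 0 i - m).
      by rewrite ler_wpM2l //; lra.
    have h3 : s * (deltahat 0 i - m) = s * deltahat 0 i - e by rewrite -sm; ring.
    lra.
  have LO : (phi deltahat <= phi δ + (s * c)%:E)%E.
    rewrite -leeBlDr //; apply/ereal_infP => _ [p2 [G2 H2] <-].
    have [pi [Gpi Hpi]] := mixH p2 p' s s0 s1 G2 Gp'.
    rewrite leeBlDr //; apply: le_trans (cost p2 pi (Hpi ord0)).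
    apply: ereal_inf_lbound; exists pi => //; split => // i.
    have hx := fin_of p2 _ _ (H2 i).
    have xle : fine (pint p2 (r (lift ord0 i))) <= δ 0 i.
      by rewrite -lee_fin -hx; exact: H2 i.
    rewrite Hpi hci hx -!EFinM -EFinD lee_fin.
    move: xle (mle i) (entl i) => xle mi [el er].
    have h1 : (1 - s) * fine (pint p2 (r (lift ord0 i))) <= (1 - s) * (deltahat 0 i + e).
      by rewrite ler_wpM2l ?subr_ge0 //; lra.
    have h2 : s * ci i <= s * (deltahat 0 i - m).
      by rewrite ler_wpM2l //; lra.
    have h3 : s * (deltahat 0 i - m) = s * deltahat 0 i - e by rewrite -sm; ring.
    have h4 : (1 - s) * (deltahat 0 i + e) = deltahat 0 i + e - s * deltahat 0 i - s * e by ring.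
    have h5 : 0 <= s * e by rewrite mulr_ge0.
    lra.
  have hw : phi δ = (fine (phi δ))%:E.
    rewrite fineK // ge0_fin_numE //; apply: le_lt_trans UP _.
    by rewrite hv -EFinD ltry.
  exists (fine (phi δ)); split => //.
  move: UP LO; rewrite hv hw -!EFinD !lee_fin => UP LO.
  rewrite ler_norml; apply/andP; split; rewrite /s in UP LO; lra.
have F : Filter (nbhs deltahat) by apply: nbhs_filter.
rewrite /phi in hv; rewrite hv; apply: cvg_EFin.
  have := @cvgr_dist_lt R _ _ (nbhs deltahat) F (fun y => y) deltahat
    (@cvg_id _ (nbhs deltahat)) _ m0.
  apply: filterS => δ hδ; have [w [hw _]] := key δ hδ.
  by rewrite /phi in hw; rewrite hw.
apply/(@cvgrPdist_le R R _ (nbhs deltahat) F) => eps eps0.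
pose eta := Num.min m (eps * m / (c + 1)).
have c1 : 0 < c + 1 by lra.
have eta0 : 0 < eta by rewrite lt_min m0 /= divr_gt0 // mulr_gt0.
have := @cvgr_dist_lt R _ _ (nbhs deltahat) F (fun y => y) deltahat
  (@cvg_id _ (nbhs deltahat)) _ eta0.
apply: filterS => δ hδ.
move: hδ; rewrite lt_min => /andP [h1 h2].
have [w [hw hb]] := key δ h1.
rewrite /phi in hw; rewrite /= hw /=.
apply: le_trans hb _.
have e0 : 0 <= `|deltahat - δ| by [].
move: h2 e0; set e := `|deltahat - δ| => h2 e0.
have -> : e / m * c = e * c / m by rewrite mulrAC.
rewrite ler_pdivrMr //.
have h3 : e * (c + 1) < eps * m by rewrite -ltr_pdivlMr.
nra.
Qed.
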